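(* Let $\mathcal{V}$ be a variety of $\Omega$-algebras with equational base $\Sigma$. Then $\Sigma^p$ is an equational base for $\mathcal{V}^p$.
   Context: Standing conventions: $\Omega$-algebras are of a plural similarity type (no nullary operation symbols, at least one operation symbol of arity $\ge2$). $T_n$ is the set of $\Omega$-terms in $x_1,\dots,x_n$ in which all $n$ variables occur. Prolongation: for an identity $\sigma$ of the form $u(y_1,\dots,y_n)=v(y_1,\dots,y_n)$ (variables of $u,v$ among $y_1,\dots,y_n$) and $m\ge1$, $\sigma^p_m$ is the set of identities $u(r_1,\dots,r_n)=v(r_1,\dots,r_n)$ obtained by substituting $r_i(x_1,\dots,x_m)$ for $y_i$, with $r_i$ ranging over $T_m$; $\sigma^p=\bigcup_{m>0}\sigma^p_m$; $\Sigma^p=\bigcup_{\sigma\in\Sigma}\sigma^p$. $\mathcal{V}^p$ is the variety defined by $\mathrm{Id}(\mathcal{V})^p$, where $\mathrm{Id}(\mathcal{V})$ is the set of all identities holding in $\mathcal{V}$. *)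

(* Defs.v *)
From mathcomp Require Import all_boot.
Unset Implicit Arguments.
Unset Strict Implicit.
Unset Printing Implicit Defensive.

(* Omega-algebras over a similarity type given by operation symbols [O]
   with arities [arity : O -> nat].  Variables are indexed by nat:
   x_1, x_2, ... are [Var 0], [Var 1], ... *)

Section UA.
Variables (O : Type) (arity : O -> nat).

Inductive term : Type :=
  | Var : nat -> term
  | App (o : O) : ('I_(arity o) -> term) -> term.
Arguments App o _ : clear implicits.

Fixpoint occurs (j : nat) (t : term) : Prop :=
  match t with
  | Var k => j = k
  | App o a => exists i, occurs j (a i)
  end.

Definition T (m : nat) (t : term) : Prop := forall j, occurs j t <-> j < m.

Fixpoint subst (r : nat -> term) (t : term) : term :=
  match t with
  | Var k => r k
  | App o a => App o (fun i => subst r (a i))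
  end.

Definition identity := (term * term)%type.

Record algebra := Algebra {
  carrier :> Type;
  op : forall o : O, ('I_(arity o) -> carrier) -> carrier }.
Arguments op a o _ : clear implicits.

Fixpoint eval (A : algebra) (e : nat -> A) (t : term) {struct t} : A :=
  match t with
  | Var k => e k
  | App o a => op A o (fun i => eval A e (a i))
  end.

Definition satisfies (A : algebra) (s : identity) : Prop :=
  forall e : nat -> A, eval A e s.1 = eval A e s.2.

Definition models (A : algebra) (Sigma : identity -> Prop) : Prop :=
  forall s, Sigma s -> satisfies A s.

Definition Id_of_Mod (Sigma : identity -> Prop) : identity -> Prop :=
  fun s => forall B : algebra, models B Sigma -> satisfies B s.

Definition prolong_m (sigma : identity) (m : nat) : identity -> Prop :=
  fun s => exists n (r : nat -> term),
    (forall j, (occurs j sigma.1 \/ occurs j sigma.2) -> j < n) /\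
    (forall i, i < n -> T m (r i)) /\
    s = (subst r sigma.1, subst r sigma.2).

Definition prolong (sigma : identity) : identity -> Prop :=
  fun s => exists m, 0 < m /\ prolong_m sigma m s.

Definition prolongSet (Sigma : identity -> Prop) : identity -> Prop :=
  fun s => exists sigma, Sigma sigma /\ prolong sigma s.

Definition plural : Prop :=
  (forall o, 0 < arity o) /\ (exists o, 1 < arity o).

End UA.
Arguments App {O arity} o _.
Arguments Var {O arity} _.

(* Main.v *)
Require Import Defs.
From mathcomp Require Import all_boot.
From Stdlib Require Import ClassicalEpsilon FunctionalExtensionality ProofIrrelevance.

Section Pf.
Variables (O : Type) (arity : O -> nat).
Notation term := (term O arity).

Lemma eval_subst (A : algebra O arity) e r (t : term) :
  eval O arity A e (subst O arity r t) = eval O arity A (fun j => eval O arity A e (r j)) t.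
Proof.
elim: t => [k|o a IH] //=. congr (op _ _ _ _ _); apply: functional_extensionality => i; exact: IH.
Qed.

Lemma eval_ext (A : algebra O arity) e1 e2 (t : term) :
  (forall j, occurs O arity j t -> e1 j = e2 j) -> eval O arity A e1 t = eval O arity A e2 t.
Proof.
elim: t => [k|o a IH] /= H; first exact: H.
congr (op _ _ _ _ _); apply: functional_extensionality => i; apply: IH => j Hj; apply: H; by exists i.
Qed.

Lemma bound (t : term) : exists n, forall j, occurs O arity j t -> j < n.
Proof.
elim: t => [k|o a IH] /=; first by exists k.+1 => j ->.
pose f i := proj1_sig (constructive_indefinite_description _ (IH i)).
exists (\max_(i : 'I_(arity o)) f i) => j [i Hi].
have := proj2_sig (constructive_indefinite_description _ (IH i)) j Hi.
move=> h; apply: leq_trans h _; exact: (@leq_bigmax _ f i).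
Qed.

Hypothesis Hpos : forall o, 0 < arity o.

Lemma has_var (t : term) : exists j, occurs O arity j t.
Proof.
elim: t => [k|o a IH] /=; first by exists k.
have [j Hj] := IH (Ordinal (Hpos o)). by exists j, (Ordinal (Hpos o)).
Qed.

Variables (A : algebra O arity) (m : nat) (e : nat -> A).

Definition Bc := {x : A | exists t, T O arity m t /\ eval O arity A e t = x}.

Definition wit (x : Bc) : term :=
  proj1_sig (constructive_indefinite_description _ (proj2_sig x)).
Lemma witP (x : Bc) : T O arity m (wit x) /\ eval O arity A e (wit x) = proj1_sig x.
Proof. exact: (proj2_sig (constructive_indefinite_description _ (proj2_sig x))). Qed.

Lemma Bop_proof o (args : 'I_(arity o) -> Bc) :
  exists t, T O arity m t /\ eval O arity A e t = op O arity A o (fun i => proj1_sig (args i)).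
Proof.
exists (App o (fun i => wit (args i))); split.
- move=> j; split => /=.
  + by move=> [i Hi]; apply/(proj1 (witP (args i)) j).
  + move=> Hj; exists (Ordinal (Hpos o)); exact/(proj1 (witP _) j).
- simpl; congr (op _ _ _ _ _); apply: functional_extensionality => i; exact: (proj2 (witP _)).
Qed.

Definition B : algebra O arity :=
  Algebra O arity Bc (fun o args => exist _ _ (Bop_proof o args)).

Lemma val_eval g (t : term) :
  proj1_sig (eval O arity B g t) = eval O arity A (fun j => proj1_sig (g j)) t.
Proof.
elim: t => [k|o a IH] //=. congr (op _ _ _ _ _); apply: functional_extensionality => i; exact: IH.
Qed.

End Pf.

Theorem corollary3p3 (O : Type) (arity : O -> nat) (Hplural : plural O arity)
  (Sigma : identity O arity -> Prop) :
  forall A : algebra O arity,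
    models O arity A (prolongSet O arity Sigma) <->
    models O arity A (prolongSet O arity (Id_of_Mod O arity Sigma)).
Proof.
have Hpos := proj1 Hplural.
move=> A; split; last first.
  move=> H s [sg [Hs Hp]]; apply: H; exists sg; split => // B HB; exact: HB.
move=> HA s [[u v] [Hid [m [Hm [n [r [Hocc [HT ->]]]]]]]] e /=.
pose Bm := B O arity Hpos A m e.
have HB : models O arity Bm Sigma.
  move=> [u' v'] Hs g /=.
  have [n1 H1] := bound O arity u'; have [n2 H2] := bound O arity v'.
  pose r' j := wit O arity A m e (g j).
  have := HA (subst O arity r' u', subst O arity r' v').
  have Hpr : prolongSet O arity Sigma (subst O arity r' u', subst O arity r' v').
    exists (u', v'); split => //; exists m; split => //; exists (maxn n1 n2), r'; split; [|split] => //=.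
    - move=> j [/H1 h|/H2 h]; apply: leq_trans h _; by rewrite ?leq_maxl ?leq_maxr.
    - move=> i _; exact: (proj1 (witP O arity A m e (g i))).
  move=> /(_ Hpr e) /=; rewrite !eval_subst.
  have Hr : (fun j => eval O arity A e (r' j)) = (fun j => proj1_sig (g j)).
    apply: functional_extensionality => j; exact: (proj2 (witP O arity A m e (g j))).
  rewrite Hr -!val_eval => Heq.
  move: (eval _ _ _ g u') (eval _ _ _ g v') Heq => [x px] [y py] /= Exy.
  subst y; f_equal; apply: proof_irrelevance.
have [j0 Hj0] := has_var O arity Hpos u.
have Hn : 0 < n by apply: leq_ltn_trans (Hocc j0 (or_introl Hj0)).
pose r' j := if j < n then r j else r 0.
have HT' : forall j, T O arity m (r' j).
  move=> j; rewrite /r'; case: ifP => h; apply: HT => //.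
pose g j : Bc O arity A m e := exist _ (eval O arity A e (r' j)) (ex_intro _ (r' j) (conj (HT' j) erefl)).
have := Hid Bm HB g.
rewrite /= !eval_subst => Heq.
have Hg : forall t, (forall j, occurs O arity j t -> j < n) ->
   eval O arity A (fun j => eval O arity A e (r j)) t = proj1_sig (eval O arity Bm g t).
  move=> t Ht; rewrite val_eval; apply: eval_ext => j /Ht hj /=.
  by rewrite /r' hj.
rewrite Hg; last by move=> j h; apply: Hocc; left.
rewrite Hg; last by move=> j h; apply: Hocc; right.
by rewrite Heq.
Qed.
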